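(* Let $X=\{1,\dots,n\}$, $Y$ finite, $Q$ a symmetric irreducible stochastic matrix on $Y$ (notation in context). Let $0\le k\le h\le n-1$ and let $\underline a=(a_0,\dots,a_m)$ be a type with $a_0+\cdots+a_m=h+1$ and $\ell(\underline a)\le k$; put $\underline a'=(a_0-1,a_1,\dots,a_m)$. Then every $F\in P_{h,\underline a',k}$ satisfies $$\Delta_hF=\big(|Y|(n+\ell(\underline a)-k-h)(h-k+1)-|Y|(n-h)\big)F.$$
   Context: $Q$ acts on $L(Y)$ by $(Qf)(y)=\sum_{y'}q(y,y')f(y')$, with distinct eigenvalues $\lambda_0=1,\dots,\lambda_m$ and eigenspaces $W_0$ (constants), $W_1,\dots,W_m$. For $0\le k\le n$, $\Theta_k$ is the set of functions $\theta$ with $\mathrm{dom}(\theta)$ a $k$-subset of $X$ and values in $Y$ ($\Theta_0$ = empty function); $\varphi\subseteq\theta$ means $\mathrm{dom}\varphi\subseteq\mathrm{dom}\theta$ and $\theta|_{\mathrm{dom}\varphi}=\varphi$. For $1\le k\le n$: $(D_kF)(\varphi)=\sum_{\theta\in\Theta_k:\theta\supseteq\varphi}F(\theta)$ ($D_k:L(\Theta_k)\to L(\Theta_{k-1})$) and $(D_k^*F)(\theta)=\sum_{\varphi\in\Theta_{k-1}:\varphi\subseteq\theta}F(\varphi)$; $D_0:=0$. $\Delta_h$ is the operator on $L(\Theta_h)$ given by $(\Delta_hF)(\theta)=\sum F(\varphi)$, the sum over all $\varphi\in\Theta_h$ with $|\mathrm{dom}\varphi\cap\mathrm{dom}\theta|=h-1$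 and $\varphi=\theta$ on $\mathrm{dom}\varphi\cap\mathrm{dom}\theta$. Types $\underline b=(b_0,\dots,b_m)$, $|\underline b|=\sum b_i$, $\ell(\underline b)=b_1+\cdots+b_m$, $\underline b'=(b_0-1,b_1,\dots,b_m)$. A fundamental function of type $\underline b$ on $A$, $|A|=|\underline b|$, is $F=\bigotimes_{j\in A}F^j$ ($F(\theta)=\prod_{j\in A}F^j(\theta(j))$ on $Y^A$, $0$ elsewhere) with each $F^j$ in some $W_{i_j}$ and exactly $b_i$ indices with $i_j=i$; $P_{k,\underline b,A}$ is their span, $P_{k,\underline b}=\bigoplus_{|A|=k}P_{k,\underline b,A}$ ($\{0\}$ if an entry is negative). $D_{k,\underline b}=D_k|_{P_{k,\underline b}}$, $D^*_{k,\underline b}=D^*_k|_{P_{k-1,\underline b'}}$. For $|\underline b|=k$: $P_{k,\underline b,k}=\ker D_{k,\underline b}$; for $k<h\le n$, $|\underline b|=h$, $\ell(\underline b)\le k$: $P_{h,\underline b,k}=D^*_{h,\underline b}(P_{h-1,\underline b',k})$. *)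

(* Defs.v *)
From HB Require Import structures.
From mathcomp Require Import all_boot all_order all_algebra.
From mathcomp Require Import reals.
Set Implicit Arguments. Unset Strict Implicit. Unset Printing Implicit Defensive.
Import Order.TTheory GRing.Theory Num.Theory.
Local Open Scope ring_scope.

Section Defs.
Variables (R : realType) (Y : finType).

Definition Qop (q : Y -> Y -> R) (f : Y -> R) : Y -> R :=
  fun y => \sum_(y' : Y) q y y' * f y'.

Fixpoint qpow (q : Y -> Y -> R) (t : nat) : Y -> Y -> R :=
  match t with
  | 0 => fun y y' => (y == y')%:R
  | t'.+1 => fun y y' => \sum_(z : Y) q y z * qpow q t' z y'
  end.

Definition Qsymmetric (q : Y -> Y -> R) := forall y y', q y y' = q y' y.
Definition Qstochastic (q : Y -> Y -> R) :=
  (forall y y', 0 <= q y y') /\ (forall y, \sum_(y' : Y) q y y' = 1).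
Definition Qirreducible (q : Y -> Y -> R) :=
  forall y y', exists t, 0 < qpow q t y y'.

Definition inW (q : Y -> Y -> R) (mu : R) (f : Y -> R) :=
  forall y, Qop q f y = mu * f y.
Definition is_eigenvalue (q : Y -> Y -> R) (mu : R) :=
  exists f : Y -> R, (exists y, f y != 0) /\ inW q mu f.

(** lam_0 = 1, lam_1, ..., lam_m is an enumeration of the distinct eigenvalues
    of Q; W_i := eigenspace of lam_i. *)
Definition eigen_enum (q : Y -> Y -> R) (m : nat) (lam : 'I_m.+1 -> R) :=
  [/\ injective lam, lam ord0 = 1, (forall i, is_eigenvalue q (lam i))
    & (forall mu, is_eigenvalue q mu -> exists i, mu = lam i)].

Variable n : nat.

Definition PF := {ffun 'I_n -> option Y}.
Definition dom (t : PF) : {set 'I_n} := [set x | t x != None].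
Definition inTheta (k : nat) (t : PF) : bool := #|dom t| == k.
Definition psub (p t : PF) : bool := [forall x, (p x != None) ==> (p x == t x)].

(** D_k : L(Theta_k) -> L(Theta_{k-1}); D_0 := 0.  Functions on Theta_j are
    represented as functions PF -> R (only values on Theta_j matter). *)
Definition Dop (k : nat) (F : PF -> R) : PF -> R := fun p =>
  match k with
  | 0 => 0
  | k'.+1 => if inTheta k' p then \sum_(t : PF | inTheta k t && psub p t) F t
             else 0
  end.

Definition Dadj (k : nat) (F : PF -> R) : PF -> R := fun t =>
  if inTheta k t then \sum_(p : PF | inTheta k.-1 p && psub p t) F p else 0.

Definition Delta (h : nat) (F : PF -> R) : PF -> R := fun t =>
  \sum_(p : PF | [&& inTheta h p, #|dom p :&: dom t|.+1 == h
                    & [forall x in dom p :&: dom t, p x == t x]]) F p.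

Variable m : nat.

(** Types b = (b_0,...,b_m), integer valued so that b' may have b_0 - 1 < 0. *)
Definition type := 'I_m.+1 -> int.
Definition type_size (b : type) : int := \sum_(i < m.+1) b i.
Definition type_ell (b : type) : int := \sum_(i < m.+1 | i != ord0) b i.
Definition tprime (b : type) : type :=
  fun i => if i == ord0 then b i - 1 else b i.

Variables (q : Y -> Y -> R) (lam : 'I_m.+1 -> R).

(** F is a fundamental function of type b on A. (If some b_i < 0 there is
    none, so the spans below are {0}, as in the paper.) *)
Definition fundamental (b : type) (A : {set 'I_n}) (F : PF -> R) : Prop :=
  #|A|%:Z = type_size b /\
  exists (ix : 'I_n -> 'I_m.+1) (Fj : 'I_n -> Y -> R),
    [/\ (forall j, j \in A -> inW q (lam (ix j)) (Fj j)),
        (forall i, #|[set j in A | ix j == i]|%:Z = b i)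
      & (forall t, F t = if dom t == A then \prod_(j in A) oapp (Fj j) 0 (t j)
                         else 0)].

Definition span_of (S : (PF -> R) -> Prop) (F : PF -> R) : Prop :=
  exists (N : nat) (fs : 'I_N -> PF -> R) (cs : 'I_N -> R),
    (forall i, S (fs i)) /\ forall t, F t = \sum_(i < N) cs i * fs i t.

Definition Pkb (k : nat) (b : type) (F : PF -> R) : Prop :=
  span_of (fun G => exists A : {set 'I_n}, #|A| = k /\ fundamental b A G) F.

(** P_{k+d,b,k}, by recursion on d:
    P_{k,b,k} = ker D_{k,b};  P_{h,b,k} = D^*_{h,b}(P_{h-1,b',k}). *)
Fixpoint Pd (d : nat) (b : type) (k : nat) (F : PF -> R) : Prop :=
  match d with
  | 0 => Pkb k b F /\ (forall p, Dop k F p = 0)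
  | d'.+1 => exists G, [/\ Pkb (k + d') (tprime b) G, Pd d' (tprime b) k G
                          & forall t, F t = Dadj (k + d) G t]
  end.

(** P_{h,b,k} (meaningful for k <= h). *)
Definition Phbk (h : nat) (b : type) (k : nat) (F : PF -> R) : Prop :=
  Pd (h - k) b k F.

End Defs.

(* Main.v *)
Require Import Defs.
From HB Require Import structures.
From mathcomp Require Import all_boot all_order all_algebra.
From mathcomp Require Import reals.
From mathcomp Require Import ring lra.
Set Implicit Arguments. Unset Strict Implicit. Unset Printing Implicit Defensive.
Import Order.TTheory GRing.Theory Num.Theory.
Local Open Scope ring_scope.

Section Work.
Variables (R : realType) (Y : finType) (n : nat).
Local Notation PF := (PF Y n).
Implicit Types (t p : PF).

Definition rem t (x : 'I_n) : PF := [ffun i => if i == x then None else t i].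
Definition upd t (x : 'I_n) (v : option Y) : PF := [ffun i => if i == x then v else t i].

Lemma in_dom t x : (x \in dom t) = (t x != None).
Proof. by rewrite inE. Qed.

Lemma dom_rem t x : dom (rem t x) = dom t :\ x.
Proof. by apply/setP=> i; rewrite !inE ffunE; case: (i =P x). Qed.

Lemma dom_upd t x y : dom (upd t x (Some y)) = x |: dom t.
Proof. by apply/setP=> i; rewrite !inE ffunE; case: (i =P x). Qed.

Lemma upd_rem t x v : upd (rem t x) x v = upd t x v.
Proof. by apply/ffunP=> i; rewrite !ffunE; case: (i =P x). Qed.

Lemma rem_upd_same t x v : t x = None -> rem (upd t x v) x = t.
Proof. by move=> tx; apply/ffunP=> i; rewrite !ffunE; case: (i =P x) => // ->. Qed.

Lemma rem_upd t x z v : x != z -> rem (upd t z v) x = upd (rem t x) z v.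
Proof.
move=> nxz; apply/ffunP=> i; rewrite !ffunE.
by case: (eqVneq i x) => [->|]; rewrite ?(negbTE nxz) //.
Qed.

Lemma rem_upd_self t x v : rem (upd t x v) x = rem t x.
Proof. by apply/ffunP=> i; rewrite !ffunE; case: (i =P x). Qed.

Lemma upd_self t x y : t x = Some y -> upd t x (Some y) = t.
Proof. by move=> tx; apply/ffunP=> i; rewrite !ffunE; case: (i =P x) => // ->. Qed.

Lemma psubP p t : reflect (forall x, p x != None -> p x = t x) (psub p t).
Proof.
apply: (iffP forallP) => H x; first by move=> px; move/implyP: (H x) => /(_ px) /eqP.
by apply/implyP=> px; apply/eqP; apply: H.
Qed.

Lemma reindex_bij (I J : finType) (P : pred I) (Q : pred J) (g : J -> I) (F : I -> R) :
  {in Q &, injective g} -> (forall j, Q j -> P (g j)) ->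
  (forall i, P i -> exists2 j, Q j & g j = i) ->
  \sum_(i | P i) F i = \sum_(j | Q j) F (g j).
Proof.
move=> inj PQ sur.
rewrite -(big_imset _ inj) /=; apply: eq_bigl => i.
apply/idP/imsetP => [/sur [j Qj <-]|[j Qj ->]]; first by exists j.
exact: PQ.
Qed.


Lemma card_dom_rem t x : x \in dom t -> #|dom (rem t x)| = (#|dom t|).-1.
Proof. by move=> xt; rewrite dom_rem (cardsD1 x (dom t)) xt. Qed.

Lemma psub_dom p t : psub p t -> dom p \subset dom t.
Proof.
move/psubP=> H; apply/subsetP=> x; rewrite !in_dom => px.
by rewrite -(H x px).
Qed.

Lemma diff1 (A B : {set 'I_n}) : B \subset A -> #|A| = (#|B|).+1 ->
  exists x, A :\: B = [set x].
Proof.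
move=> BA cA; apply/cards1P.
by rewrite cardsD (setIidPr BA) cA subSnn.
Qed.

Lemma Dadj_rem j (G : PF -> R) t : inTheta j.+1 t ->
  Dadj j.+1 G t = \sum_(x in dom t) G (rem t x).
Proof.
rewrite /Dadj => tj; rewrite tj /=.
apply: reindex_bij.
- move=> x1 x2 x1t x2t E; have := congr1 (fun f : PF => f x1) E; rewrite /= !ffunE eqxx.
  case: (x1 =P x2) => // _ E1.
  by have := x1t : x1 \in dom t; rewrite in_dom -E1 eqxx.
- move=> x xt; rewrite /inTheta card_dom_rem // (eqP tj) eqxx /=.
  apply/psubP=> i; rewrite ffunE; by case: (i =P x).
- move=> p /andP[pj pt].
  have [x Hx] := diff1 (psub_dom pt) (etrans (eqP tj) (congr1 S (esym (eqP pj)))).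
  have xt : x \in dom t by have := set11 x; rewrite -Hx inE => /andP[].
  have xp : x \notin dom p by have := set11 x; rewrite -Hx inE => /andP[].
  exists x => //; apply/ffunP=> i; rewrite ffunE.
  case: (i =P x) => [->|/eqP ix]; first by move: xp; rewrite in_dom negbK => /eqP.
  case ip: (i \in dom p); first by move: ip; rewrite in_dom => /(psubP _ _ pt).
  have : i \notin dom t :\: dom p by rewrite Hx inE.
  rewrite inE ip /= in_dom negbK => /eqP ->.
  by move/negbT: ip; rewrite in_dom negbK => /eqP.
Qed.

Lemma Dop_upd j (F : PF -> R) p : inTheta j p ->
  Dop j.+1 F p = \sum_(x in ~: dom p) \sum_(y : Y) F (upd p x (Some y)).
Proof.
rewrite /Dop => pj; rewrite pj.
rewrite pair_big_dep /=.
rewrite (reindex_bij (Q := fun u : 'I_n * Y => u.1 \notin dom p)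
   (g := fun u => upd p u.1 (Some u.2))); last first.
- move=> t /andP[tj pt].
  have [x Hx] := diff1 (psub_dom pt) (etrans (eqP tj) (congr1 S (esym (eqP pj)))).
  have xt : x \in dom t by have := set11 x; rewrite -Hx inE => /andP[].
  have xp : x \notin dom p by have := set11 x; rewrite -Hx inE => /andP[].
  move: (xt); rewrite in_dom; case txE: (t x) => [y|] // _.
  exists (x, y) => //=; apply/ffunP=> i; rewrite ffunE /=.
  case: (i =P x) => [->//|/eqP ix].
  case ip: (i \in dom p); first by move: ip; rewrite in_dom => /(psubP _ _ pt).
  have : i \notin dom t :\: dom p by rewrite Hx inE.
  rewrite inE ip /= in_dom negbK => /eqP ->.
  by move/negbT: ip; rewrite in_dom negbK => /eqP.
- move=> [x y] /= xp.
  rewrite /inTheta dom_upd cardsU1 xp (eqP pj) eqxx /=.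
  apply/psubP=> i; rewrite !ffunE; case: (i =P x) => // -> px.
  by move: xp; rewrite in_dom px.
- move=> [x1 y1] [x2 y2] x1p x2p E.
  have := congr1 (fun f : PF => f x1) E; rewrite /= !ffunE eqxx.
  case: (x1 =P x2) => [<- [->] //|_ E1].
  by move: (x1p : x1 \notin dom p); rewrite in_dom -E1.
- by apply: eq_bigl => u; rewrite andbT in_setC.
Qed.

Lemma Delta_T h (F : PF -> R) t : inTheta h t ->
  Delta h F t = \sum_(x in dom t) \sum_(z in ~: dom t) \sum_(y : Y)
                   F (upd (rem t x) z (Some y)).
Proof.
move=> /eqP th; rewrite /Delta.
under [RHS]eq_bigr do rewrite pair_big_dep /=.
rewrite pair_big_dep /=.
rewrite (reindex_bij
   (Q := fun u : 'I_n * ('I_n * Y) => (u.1 \in dom t) && (u.2.1 \notin dom t))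
   (g := fun u => upd (rem t u.1) u.2.1 (Some u.2.2))); last first.
- move=> p /and3P[/eqP hp /eqP hI /forallP ag].
  have [x Hx] : exists x, dom t :\: dom p = [set x].
    by apply/cards1P; rewrite cardsD setIC th -hI subSnn.
  have [z Hz] : exists z, dom p :\: dom t = [set z].
    by apply/cards1P; rewrite cardsD hp -hI subSnn.
  have xt : x \in dom t by have := set11 x; rewrite -Hx inE => /andP[].
  have xp : x \notin dom p by have := set11 x; rewrite -Hx inE => /andP[].
  have zp : z \in dom p by have := set11 z; rewrite -Hz inE => /andP[].
  have zt : z \notin dom t by have := set11 z; rewrite -Hz inE => /andP[].
  move: (zp); rewrite in_dom; case pzE: (p z) => [y|] // _.
  exists (x, (z, y)); first by rewrite /= xt.
  apply/ffunP=> i; rewrite /= !ffunE.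
  case: (i =P z) => [->//|/eqP iz].
  case: (i =P x) => [->|/eqP ix]; first by move: xp; rewrite in_dom negbK => /eqP.
  case ip: (i \in dom p).
    have it : i \in dom t.
      apply: contraT => it; have : i \in dom p :\: dom t by rewrite inE it ip.
      by rewrite Hz inE (negbTE iz).
    by have /implyP/(_ _)/eqP := ag i; rewrite inE ip it => ->.
  have : i \notin dom t :\: dom p by rewrite Hx inE.
  rewrite inE ip /= in_dom negbK => /eqP ->.
  by move/negbT: ip; rewrite in_dom negbK => /eqP.
- move=> [x [z y]] /= /andP[xt zt].
  have hD : dom (upd (rem t x) z (Some y)) :&: dom t = dom t :\ x.
    apply/setP=> i; rewrite dom_upd dom_rem !inE.
    case: (i =P z) => [->|_] /=; last by rewrite -andbA andbb.
    by move: zt; rewrite in_dom negbK => /eqP ->; rewrite eqxx andbF.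
  have cD : #|dom t :\ x|.+1 = h by rewrite -th (cardsD1 x (dom t)) xt.
  apply/andP; split; [|apply/andP; split].
  + rewrite /inTheta dom_upd dom_rem cardsU1 in_setD1 negb_and zt orbT add1n cD //.
  + by rewrite hD cD.
  + apply/forallP=> i; apply/implyP; rewrite hD in_setD1 => /andP[ix it].
    rewrite !ffunE (negbTE ix).
    by case: (i =P z) => [iz|//]; move: zt; rewrite -iz it.
- move=> [x1 [z1 y1]] [x2 [z2 y2]] /andP[/= x1t z1t] /andP[/= x2t z2t] E.
  have := congr1 (fun f : PF => f z1) E; rewrite /= !ffunE eqxx.
  case: (z1 =P z2) => [ez [ey]|_]; last first.
    case: (z1 =P x2) => [e|_]; first by move: z1t; rewrite e x2t.
    by move: z1t; rewrite in_dom negbK => /eqP ->.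
  subst z2 y2; have := congr1 (fun f : PF => f x1) E; rewrite /= !ffunE eqxx.
  have -> : (x1 == z1) = false by apply/eqP => e; move: x1t; rewrite e (negbTE z1t).
  case: (x1 =P x2) => [<- //|_ E1].
  by move: x1t; rewrite in_dom -E1.
- by apply: eq_bigl => u; rewrite andbT in_setC.
Qed.

Definition Sop (F : PF -> R) t := \sum_(x in dom t) \sum_(y : Y) F (upd t x (Some y)).
Definition Good j beta (F : PF -> R) := forall t, inTheta j t -> Sop F t = beta * F t.

Lemma setC_D1 (A : {set 'I_n}) x : ~: (A :\ x) = x |: ~: A.
Proof. by rewrite setCD setUC. Qed.

Lemma I1 j (F : PF -> R) t : inTheta j.+1 t ->
  Dadj j.+1 (Dop j.+1 F) t = Sop F t + Delta j.+1 F t.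
Proof.
move=> tj; rewrite Dadj_rem // Delta_T // /Sop -big_split /=.
apply: eq_bigr => x xt.
have rj : inTheta j (rem t x) by rewrite /inTheta card_dom_rem // (eqP tj).
rewrite -[X in X = _]/(Dop j.+1 F (rem t x)) Dop_upd // dom_rem setC_D1 big_setU1 /=; last by rewrite in_setC negbK.
by under eq_bigr do rewrite upd_rem.
Qed.

Lemma I2 j (F : PF -> R) t : inTheta j t ->
  Dop j.+1 (Dadj j.+1 F) t = Delta j F t + (#|Y| * (n - j))%:R * F t.
Proof.
move=> tj; rewrite Dop_upd // Delta_T //.
have E : forall z y, z \in ~: dom t ->
   Dadj j.+1 F (upd t z (Some y)) =
   F t + \sum_(x in dom t) F (upd (rem t x) z (Some y)).
  move=> z y; rewrite in_setC => zt.
  have uj : inTheta j.+1 (upd t z (Some y)).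
    by rewrite /inTheta dom_upd cardsU1 zt (eqP tj).
  rewrite Dadj_rem // dom_upd big_setU1 //=.
  rewrite rem_upd_same; last by move: zt; rewrite in_dom negbK => /eqP.
  congr (_ + _); apply: eq_bigr => x xt; rewrite rem_upd //.
  by apply/eqP => e; move: zt; rewrite -e xt.
rewrite (eq_bigr _ (fun z zt => eq_bigr _ (fun y _ => E z y zt))).
under eq_bigr do rewrite big_split /=.
rewrite big_split /= [RHS]addrC; congr (_ + _).
  rewrite (eq_bigr (fun _ => F t *+ #|Y|)); last by move=> z _; rewrite sumr_const.
  have cC : #|~: dom t| = (n - j)%N by rewrite -[n in (n - j)%N]card_ord -(cardsC (dom t)) (eqP tj) addKn.
  by rewrite sumr_const cC -mulrnA mulnC mulr_natl.
under eq_bigr do rewrite exchange_big /=.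
by rewrite exchange_big.
Qed.

Lemma G3 j beta (G : PF -> R) : Good j beta G ->
  Good j.+1 (beta + #|Y|%:R) (Dadj j.+1 G).
Proof.
move=> gG t tj; rewrite Dadj_rem // /Sop.
have E : forall x y, x \in dom t ->
  Dadj j.+1 G (upd t x (Some y)) =
  G (rem t x) + \sum_(z in dom t | z != x) G (upd (rem t z) x (Some y)).
  move=> x y xt.
  have dE : dom (upd t x (Some y)) = dom t by rewrite dom_upd; apply/setUidPr; rewrite sub1set.
  have uj : inTheta j.+1 (upd t x (Some y)) by rewrite /inTheta dE.
  rewrite Dadj_rem // dE (bigD1 x) //= rem_upd_self; congr (_ + _).
  by apply: eq_bigr => z /andP[_ zx]; rewrite rem_upd.
rewrite (eq_bigr _ (fun x xt => eq_bigr _ (fun y _ => E x y xt))).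
under eq_bigr do rewrite big_split /=.
rewrite big_split /= mulrDl addrC big_distrr /=; congr (_ + _); last first.
  by rewrite big_distrr; apply: eq_bigr => x _; rewrite sumr_const /= mulr_natl.
under eq_bigr do rewrite exchange_big /=.
rewrite (exchange_big_dep (fun z => z \in dom t)) /=; last by move=> ? ? _ /andP[].
apply: eq_bigr => z zt.
have rj : inTheta j (rem t z) by rewrite /inTheta card_dom_rem // (eqP tj).
rewrite -gG // /Sop dom_rem; apply: eq_bigl => x.
by rewrite in_setD1 zt eq_sym andbC.
Qed.

End Work.

Section Eigen.
Variables (R : realType) (Y : finType) (q : Y -> Y -> R).

Lemma W0_const : Qstochastic q -> Qirreducible q ->
  forall f, inW q 1 f -> forall y y', f y = f y'.
Proof.
move=> [q0 q1] qi f fW y y'.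
case: (@arg_maxP _ _ Y y predT f isT) => y0 _ ymax.
have cl : forall z z', f z = f y0 -> 0 < q z z' -> f z' = f y0.
  move=> z z' fz qzz.
  have E : \sum_(w : Y) q z w * (f y0 - f w) = 0.
    under eq_bigr do rewrite mulrBr.
    rewrite sumrB -big_distrl /= q1 mul1r.
    have := fW z; rewrite /Qop => ->; by rewrite mul1r fz subrr.
  have : q z z' * (f y0 - f z') = 0.
    apply: (psumr_eq0P _ E) => // w _; apply: mulr_ge0 => //.
    by rewrite subr_ge0; exact: ymax.
  move/eqP; rewrite mulf_eq0 => /orP[/eqP e|]; first by rewrite e ltxx in qzz.
  by rewrite subr_eq0 => /eqP.
have ind : forall t z z', f z = f y0 -> 0 < qpow q t z z' -> f z' = f y0.
  elim=> [|t IH] z z' fz /=.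
    by case: (z =P z') => [<- //|_]; rewrite ltxx.
  move=> pos.
  have [w ww] : exists w, 0 < q z w * qpow q t w z'.
    case: (pickP (fun w => 0 < q z w * qpow q t w z')) => [w ww|H]; first by exists w.
    have : \sum_(w : Y) q z w * qpow q t w z' <= 0.
      by apply: sumr_le0 => w _; rewrite leNgt H.
    by rewrite leNgt pos.
  have qzw : 0 < q z w.
    rewrite lt0r q0 andbT; apply/eqP => e; by move: ww; rewrite e mul0r ltxx.
  apply: (IH w) => //; first exact: (cl z).
  by rewrite -(pmulr_rgt0 _ qzw).
have [t1 p1] := qi y0 y; have [t2 p2] := qi y0 y'.
by rewrite (ind t1 y0 y) // (ind t2 y0 y').
Qed.

Lemma Wsum0 : Qsymmetric q -> Qstochastic q ->
  forall mu f, inW q mu f -> mu != 1 -> \sum_(y : Y) f y = 0.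
Proof.
move=> qs [q0 q1] mu f fW mu1.
have E : \sum_(y : Y) Qop q f y = \sum_(y : Y) f y.
  rewrite /Qop exchange_big /=; apply: eq_bigr => y' _.
  by rewrite -big_distrl /= (eq_bigr _ (fun y _ => qs y y')) q1 mul1r.
have : (mu - 1) * \sum_(y : Y) f y = 0.
  by rewrite mulrBl mul1r big_distrr /= -E (eq_bigr _ (fun y _ => fW y)) subrr.
by move/eqP; rewrite mulf_eq0 subr_eq0 (negbTE mu1) => /eqP.
Qed.

End Eigen.

Section Fund.
Variables (R : realType) (Y : finType) (n m : nat) (q : Y -> Y -> R)
  (lam : 'I_m.+1 -> R).
Hypotheses (qs : Qsymmetric q) (qst : Qstochastic q) (qi : Qirreducible q)
  (el : eigen_enum q lam).
Local Notation PF := (PF Y n).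

Lemma dom_upd_in (t : PF) x y : x \in dom t -> dom (upd t x (Some y)) = dom t.
Proof. by move=> xt; rewrite dom_upd; apply/setUidPr; rewrite sub1set. Qed.

Lemma fund_Good (b : 'I_m.+1 -> int) A (F : PF -> R) :
  @fundamental R Y n m q lam b A F ->
  Good #|A| ((b ord0)%:~R * #|Y|%:R) F.
Proof.
case: el => linj l0 _ _.
move=> [cA [ix [Fj [FjW cnt FE]]]] t /eqP tA; rewrite /Sop.
case: (dom t =P A) => [dA|ndA]; last first.
  rewrite FE (introF eqP ndA) mulr0 big1 // => x xt; apply: big1 => y _.
  by rewrite FE dom_upd_in // (introF eqP ndA).
have Pt : F t = \prod_(j in A) oapp (Fj j) 0 (t j) by rewrite FE dA eqxx.
rewrite (eq_bigr (fun x => (ix x == ord0)%:R * (#|Y|%:R * F t))); last first.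
  move=> x xt.
  have xA : x \in A by rewrite -dA.
  move: (xt); rewrite in_dom; case tx: (t x) => [y0|] // _.
  have E : forall y, F (upd t x (Some y)) =
      Fj x y * \prod_(j in A | j != x) oapp (Fj j) 0 (t j).
    move=> y; rewrite FE dom_upd_in // dA eqxx (bigD1 x) //= ffunE eqxx /=.
    by congr (_ * _); apply: eq_bigr => j /andP[_ /negbTE jx]; rewrite ffunE jx.
  rewrite (eq_bigr _ (fun y _ => E y)) -big_distrl /=.
  rewrite Pt [in RHS](bigD1 x) //= tx /=.
  case: (ix x =P ord0) => [ix0|ix0].
    have c : forall y, Fj x y = Fj x y0.
      move=> y; apply: (W0_const qst qi); rewrite -l0 -ix0; exact: FjW.
    rewrite (eq_bigr _ (fun y _ => c y)) sumr_const mul1r mulrA mulr_natl.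
    by [].
  rewrite (Wsum0 qs qst (FjW x xA)) ?mul0r //.
  by rewrite -l0; apply/eqP => /linj.
rewrite -big_distrl /= dA mulrA; congr (_ * _ * _).
rewrite -natr_sum -(cnt ord0) /=.
congr (_%:R); rewrite -sum1_card big_mkcond /= [RHS]big_mkcond /=.
by apply: eq_bigr => x _; rewrite inE; case: (x \in A); case: (ix x == ord0).
Qed.

Lemma Pkb_Good k (b : 'I_m.+1 -> int) (F : PF -> R) :
  @Pkb R Y n m q lam k b F -> Good k ((b ord0)%:~R * #|Y|%:R) F.
Proof.
move=> [N [fs [cs [fsG FE]]]] t tk; rewrite /Sop FE big_distrr /=.
under eq_bigr do under eq_bigr do rewrite FE.
under eq_bigr do rewrite exchange_big /=.
rewrite exchange_big /=; apply: eq_bigr => i _.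
have [A [cA fA]] := fsG i.
have := fund_Good fA; rewrite cA => /(_ t tk).
rewrite /Sop => E.
under eq_bigr do rewrite -big_distrr /=.
by rewrite -big_distrr /= E mulrCA.
Qed.

Definition dlt (k d : nat) (b0 : R) : R :=
  #|Y|%:R * (d%:R * (n%:R - k%:R) + d%:R - (d%:R + 1) * b0).

Lemma mainP k d : forall (b : 'I_m.+1 -> int) (F : PF -> R), (k + d <= n)%N ->
  @Pd R Y n m q lam d b k F ->
  Good (k + d) ((b ord0)%:~R * #|Y|%:R) F /\
  forall t, inTheta (k + d) t -> Delta (k + d) F t = dlt k d (b ord0)%:~R * F t.
Proof.
elim: d => [|d IH] b F /= kdn.
  move=> [Pk D0]; rewrite addn0; have gF := Pkb_Good Pk; split => // t tk.
  case: k Pk tk gF D0 kdn => [|k] Pk tk gF D0 _.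
    have d0 : dom t = set0 by apply/cards0_eq/eqP.
    have := gF t tk; rewrite /Sop d0 big_set0 => /esym S0.
    rewrite /Delta big_pred0; last by move=> p; rewrite andbF.
    rewrite /dlt; transitivity (- ((b ord0)%:~R * #|Y|%:R * F t)).
      by rewrite S0 oppr0.
    ring.
  have E := I1 F tk.
  rewrite Dadj_rem // big1 in E; last by move=> x _; exact: D0.
  rewrite (gF t tk) in E.
  have -> : Delta k.+1 F t = - ((b ord0)%:~R * #|Y|%:R * F t).
    by apply/eqP; rewrite -addr_eq0 addrC -E.
  rewrite /dlt; ring.
move=> [G [PkG PdG FE]].
have kdn' : (k + d <= n)%N by rewrite (leq_trans _ kdn) // addnS.
have [gG dG] := IH _ _ kdn' PdG.
have Fe : F = Dadj (k + d.+1) G by apply: boolp.funext => t; exact: FE.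
have tb : tprime b ord0 = b ord0 - 1 by rewrite /tprime eqxx.
rewrite tb in gG dG.
rewrite Fe addnS.
have gF := G3 gG.
have bE : ((b ord0 - 1)%:~R * #|Y|%:R + #|Y|%:R : R) = (b ord0)%:~R * #|Y|%:R.
  by rewrite rmorphB /= mulrBl mul1r subrK.
rewrite bE in gF; split => // t tk.
have E := I1 (Dadj (k + d).+1 G) tk.
rewrite (gF t tk) in E.
have E2 : Dadj (k + d).+1 (Dop (k + d).+1 (Dadj (k + d).+1 G)) t =
   (dlt k d (b ord0 - 1)%:~R + (#|Y| * (n - (k + d)))%:R) * Dadj (k + d).+1 G t.
  rewrite !Dadj_rem // big_distrr; apply: eq_bigr => x xt.
  have rj : inTheta (k + d) (rem t x) by rewrite /inTheta card_dom_rem // (eqP tk).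
  by rewrite I2 // dG // /= mulrDl.
rewrite E2 in E.
have -> : Delta (k + d).+1 (Dadj (k + d).+1 G) t =
   (dlt k d (b ord0 - 1)%:~R + (#|Y| * (n - (k + d)))%:R) * Dadj (k + d).+1 G t
   - (b ord0)%:~R * #|Y|%:R * Dadj (k + d).+1 G t.
  by rewrite E addrC addKr.
rewrite /dlt natrM natrB // rmorphB /= !natrD; ring.
Qed.

End Fund.



Unset Implicit Arguments.
Set Strict Implicit.

Theorem corollary7p9 (R : realType) (Y : finType) (q : Y -> Y -> R)
  (m : nat) (lam : 'I_m.+1 -> R) (n k h : nat) (a : 'I_m.+1 -> int) :
  Qsymmetric q -> Qstochastic q -> Qirreducible q -> eigen_enum q lam ->
  (k <= h)%N -> (h < n)%N ->
  (forall i, 0 <= a i) -> type_size a = (h.+1)%:Z -> type_ell a <= k%:Z ->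
  forall F : PF Y n -> R, @Phbk R Y n m q lam h (tprime a) k F ->
  forall t : PF Y n, inTheta h t ->
    @Delta R Y n h F t =
      (#|Y|%:R * ((n%:R + (type_ell a)%:~R - k%:R - h%:R) * (h%:R - k%:R + 1))
       - #|Y|%:R * (n%:R - h%:R)) * F t.
Proof.
move=> qs qst qi el kh hn _ sz _ F PF t th.
have hk : (k + (h - k))%N = h by rewrite subnKC.
have kn : (k + (h - k) <= n)%N by rewrite hk ltnW.
have [_ dE] := mainP qs qst qi el kn PF.
rewrite hk in dE; rewrite dE //; congr (_ * F t).
have ai : a ord0 = (h.+1)%:Z - type_ell a.
  by rewrite -sz /type_size (bigD1 ord0) //= addrK.
rewrite /tprime eqxx ai /dlt !rmorphB /= natrB // !pmulrn intS rmorphD /= rmorph1.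
ring.
Qed.
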